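(* Let $p$ be a prime, $\mathbb{F}=\mathbb{F}_p$, let $m>k\ge1$ and $s\ge1$ be integers, and let $S$ be a collection (possibly with repetitions) of $k$-dimensional linear subspaces of $\mathbb{F}^m$. If $|S|\ge s^{k+1}p^{\frac{k^2+k-2}{2}}$, then $S$ contains a sunflower of size at least $s$.
   Context: A collection $V_1,\dots,V_s$ of (possibly repeated) subspaces of $\mathbb{F}^m$ is a sunflower if, with $C=\bigcap_{j}V_j$, one has $V_i\cap V_{i'}=C$ for all $i\ne i'$. *)

(* Defs.v *)
From HB Require Import structures.
From mathcomp Require Import all_boot all_order all_algebra.
Set Implicit Arguments. Unset Strict Implicit. Unset Printing Implicit Defensive.
Import GRing.Theory.

Definition sunflower (K : fieldType) (vT : vectType K) (N : nat)
  (V : 'I_N -> {vspace vT}) (I : {set 'I_N}) : Prop :=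
  forall i j, i \in I -> j \in I -> i != j ->
    (V i :&: V j)%VS = (\bigcap_(l in I) V l)%VS.

(* Main.v *)
Require Import Defs.
From HB Require Import structures.
From mathcomp Require Import all_boot all_order all_algebra.
From mathcomp Require Import finfield zify.

Section Aux.
Variables (p m s N : nat) (S : 'I_N -> {vspace 'rV['F_p]_m}).
Local Notation vT := 'rV['F_p]_m.

Lemma card_vsp (V : {vspace vT}) : #|V| = (#|'F_p| ^ \dim V)%N.
Proof. exact: card_vspace. Qed.

Lemma sf_const (I : {set 'I_N}) X : (forall l, l \in I -> S l = X) -> sunflower S I.
Proof.
move=> h i j iI jI _; rewrite !h // capvv.
apply/eqP; rewrite eqEsubv; apply/andP; split.
  by apply/subv_bigcapP => l lI; rewrite h.
by apply: (@bigcapv_inf _ _ _ i) => //; rewrite h.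
Qed.

Lemma pigeon (I J : finType) (A : {set I}) (P : {set J}) (Q : I -> J -> bool) n :
  (forall i, i \in A -> exists2 y, y \in P & Q i y) -> (#|P| * n < #|A|)%N ->
  exists2 y, y \in P & (n < #|[set i in A | Q i y]|)%N.
Proof.
move=> hA hc.
case: (boolP [exists y in P, n < #|[set i in A | Q i y]|]) => [/exists_inP[y yP hy]|/exists_inP hn].
  by exists y.
exfalso.
have [i0 i0A] : exists i0, i0 \in A.
  by apply/set0Pn; rewrite -card_gt0; apply: leq_ltn_trans hc.
have [y0 _ _] := hA i0 i0A.
pose f i := odflt y0 [pick y in P | Q i y].
have hf i : i \in A -> (f i \in P) && Q i (f i).
  move=> iA; rewrite /f; case: pickP => [y /andP[-> ->] //| h] /=.
  by have [y yP qy] := hA i iA; have := h y; rewrite yP qy.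
have : (#|A| <= #|P| * n)%N.
  rewrite -sum1_card (partition_big f (mem P)); last by move=> i /hf /andP[].
  rewrite -sum_nat_const leq_sum // => y yP.
  have -> : \sum_(i in A | f i == y) 1 = #|[set i in A | f i == y]|.
    by rewrite -sum1_card; apply: eq_bigl => i; rewrite inE.
  rewrite leqNgt; apply/negP => hy; apply: hn; exists y => //.
  apply: (leq_trans hy); apply: subset_leq_card; apply/subsetP => i.
  by rewrite !inE => /andP[iA /eqP fi]; rewrite iA -fi; case/andP: (hf i iA).
by rewrite leqNgt hc.
Qed.

Lemma step d C (A : {set 'I_N}) : (0 < d)%N ->
  (forall i, i \in A -> (C <= S i)%VS /\ \dim (S i) = (\dim C + d)%N) ->
  (exists I : {set 'I_N}, (s <= #|I|)%N /\ sunflower S I) \/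
  exists T : {set 'I_N}, [/\ T \subset A, (#|T| < s)%N &
     forall i, i \in A -> exists2 t, t \in T & (\dim C < \dim (S i :&: S t))%N].
Proof.
move=> d0 hA.
pose Pt (T : {set 'I_N}) := (T \subset A) &&
  [forall i in T, forall j in T, (i != j) ==> (S i :&: S j == C)%VS].
have P0: Pt set0 by rewrite /Pt sub0set; apply/forall_inP => i; rewrite inE.
have [T mT] := ex_maxset (ex_intro _ set0 P0).
have /andP[TA /forall_inP hT] := maxsetp mT.
have hT' i j : i \in T -> j \in T -> i != j -> (S i :&: S j)%VS = C.
  by move=> iT jT ij; apply/eqP; move/forall_inP: (hT i iT) => /(_ j jT) /implyP; apply.
case: (leqP s #|T|) => hs.
  left; exists T; split=> // i j iT jT ij.
  have E := hT' i j iT jT ij; rewrite E.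
  apply/eqP; rewrite eqEsubv; apply/andP; split.
    by apply/subv_bigcapP => l lT; exact: (hA l (subsetP TA l lT)).1.
  rewrite -E subv_cap; apply/andP; split.
    by apply: (@bigcapv_inf _ _ _ i).
  by apply: (@bigcapv_inf _ _ _ j).
right; exists T; split => // i iA.
have [Ci di] := hA i iA.
case: (boolP (i \in T)) => iT.
  by exists i => //; rewrite capvv di; lia.
case: (boolP [exists t in T, (S i :&: S t != C)%VS]) => [/exists_inP[t tT ht] | /exists_inP hn].
  exists t => //.
  have sub: (C <= S i :&: S t)%VS by rewrite subv_cap Ci; exact: (hA t (subsetP TA t tT)).1.
  rewrite ltn_neqAle dimvS // andbT; apply: contra ht => /eqP e.
  by rewrite eq_sym eqEdim sub -e leqnn.
have hn' t : t \in T -> (S i :&: S t)%VS = C.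
  by move=> tT; apply/eqP; apply/negPn; apply/negP => h; apply: hn; exists t.
exfalso.
have PiT : Pt (i |: T).
  rewrite /Pt subUset sub1set iA TA /=.
  apply/forall_inP => x /setU1P xiT; apply/forall_inP => y /setU1P yiT; apply/implyP => xy.
  case: xiT => [ex|xT]; case: yiT => [ey|yT].
  - by rewrite ex ey eqxx in xy.
  - by rewrite ex hn'.
  - by rewrite ey capvC hn'.
  - by rewrite hT'.
have E := maxsetsup mT PiT (subsetUr _ _).
by move: iT; rewrite -E setU11.
Qed.


Fixpoint g (d : nat) : nat :=
  match d with
  | 0 => s
  | 1 => s * s
  | d'.+1 => s * #|'F_p| ^ d'.+1 * g d'
  end%N.

Lemma gS d : g d.+2 = (s * #|'F_p| ^ d.+2 * g d.+1)%N.
Proof. by []. Qed.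

Lemma q_pos : (0 < #|'F_p|)%N.
Proof. by apply/card_gt0P; exists 0%R. Qed.

Lemma g_pos d : (0 < s)%N -> (0 < g d)%N.
Proof.
move=> s0; elim: d => [|[|d] IH] //; first by rewrite /= muln_gt0 s0.
by rewrite gS muln_gt0 IH andbT muln_gt0 s0 expn_gt0 q_pos.
Qed.

Lemma main d : (0 < d)%N -> (0 < s)%N -> forall C (A : {set 'I_N}),
  (forall i, i \in A -> (C <= S i)%VS /\ \dim (S i) = (\dim C + d)%N) ->
  (g d <= #|A|)%N ->
  exists I : {set 'I_N}, (s <= #|I|)%N /\ sunflower S I.
Proof.
move=> + s0; elim: d => [//|d IH] _ C A hA hg.
case: (step d.+1 C A isT hA) => [//|[T [TA Ts hT]]].
case: d IH hg hA hT => [|d] IH hg hA hT.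
  have hT2 i : i \in A -> exists2 t, t \in T & S i == S t.
    move=> iA; have [t tT ht] := hT i iA; exists t => //.
    have [_ di] := hA i iA; have [_ dt] := hA t (subsetP TA t tT).
    have e1 : (S i :&: S t)%VS = S i.
      by apply/eqP; rewrite eqEdim capvSl di; lia.
    have e2 : (S i :&: S t)%VS = S t.
      by apply/eqP; rewrite eqEdim capvSr dt; lia.
    by rewrite -e1 e2.
  have [|t tT hF] := @pigeon _ _ A T _ s.-1 hT2.
    apply: leq_trans hg; rewrite /=. 
    have : (#|T| <= s.-1)%N by lia.
    move=> h; apply: (@leq_ltn_trans (s.-1 * s.-1)); first exact: leq_mul.
    by rewrite -subn1; apply: ltn_mul; lia.
  exists [set i in A | S i == S t]; split; first by lia.
  by apply: (@sf_const _ (S t)) => l; rewrite inE => /andP[_ /eqP].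
pose W t := (S t :\: C)%VS.
have hW t : t \in T -> [/\ (W t <= S t)%VS, (C :&: W t = 0)%VS & \dim (W t) = d.+2].
  move=> tT; have [Ct dt] := hA t (subsetP TA t tT).
  split; first exact: diffvSl.
    by rewrite capvC capv_diff.
  have := dimv_cap_compl (S t) C; rewrite (capv_idPr Ct) -/(W t); lia.
pose P := [set y : 'I_N * vT | (y.1 \in T) && (y.2 \in W y.1)].
pose Q (i : 'I_N) (y : 'I_N * vT) := (y.2 != 0%R) && (y.2 \in S i).
have hex i : i \in A -> exists2 y, y \in P & Q i y.
  move=> iA; have [t tT ht] := hT i iA.
  have [Wt CW dW] := hW t tT.
  have [Ct dt] := hA t (subsetP TA t tT).
  pose X := (S i :&: S t)%VS.
  have hs := dimv_sum_cap X (W t).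
  have : (\dim (X + W t) <= \dim (S t))%N.
    by apply: dimvS; rewrite subv_add capvSr Wt.
  move=> hle.
  have nz : (X :&: W t)%VS != 0%VS.
    by rewrite -dimv_eq0; rewrite -/X in ht; lia.
  exists (t, vpick (X :&: W t)%VS).
    by rewrite inE /=; rewrite tT; have := memv_pick (X :&: W t)%VS; rewrite memv_cap => /andP[].
  rewrite /Q /= vpick0 nz /=.
  by have := memv_pick (X :&: W t)%VS; rewrite !memv_cap => /andP[/andP[]].
have cardP : #|P| = (#|T| * #|'F_p| ^ d.+2)%N.
  rewrite -sum1_card.
  rewrite (eq_bigl (fun y => (y.1 \in T) && (y.2 \in W y.1))); last by move=> y; rewrite inE.
  rewrite -(pair_big_dep (mem T) (fun t w => w \in W t) (fun _ _ => 1%N)) /=.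
  rewrite -sum_nat_const; apply: eq_bigr => t tT.
  have [_ _ dW] := hW t tT.
  by rewrite sum1_card card_vsp dW.
have [|[t w] yP hF] := @pigeon _ _ A P Q (g d.+1).-1 hex.
  rewrite cardP; move: hg; rewrite gS.
  have := g_pos d.+1 s0; have : (0 < #|'F_p| ^ d.+2)%N by rewrite expn_gt0 q_pos.
  move: (g d.+1) (#|'F_p| ^ d.+2) => G Q0 hQ hG hg.
  apply: leq_trans hg.
  have h1 : (#|T| * Q0 * G.-1 <= s.-1 * Q0 * G.-1)%N by rewrite !leq_mul //; lia.
  apply: (leq_ltn_trans h1); rewrite -!subn1 -mulnA -[(s * _ * _)%N]mulnA.
  apply: ltn_mul; first lia.
  rewrite ltn_pmul2l //; lia.
move: yP; rewrite inE /= => /andP[tT wW].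
have [Wt CW dW] := hW t tT.
apply: (IH isT (C + <[w]>)%VS [set i in A | Q i (t, w)]); last first.
  by have := g_pos d.+1 s0; lia.
move=> i; rewrite inE /Q /= => /andP[iA /andP[w0 wi]].
have [Ci di] := hA i iA.
split; first by rewrite subv_add Ci -memvE.
rewrite dimv_disjoint_sum ?dim_vline ?w0; first lia.
apply/eqP; rewrite -subv0 -CW; apply: capvS => //; by rewrite -memvE.
Qed.

Lemma g_eq d : g d.+1 = (s ^ d.+2 * #|'F_p| ^ ((d.+1 ^ 2 + d.+1 - 2) %/ 2))%N.
Proof.
elim: d => [|d IH]; first by rewrite /= expn0 muln1.
rewrite gS IH.
have -> : ((d.+2 ^ 2 + d.+2 - 2) = (d.+1 ^ 2 + d.+1 - 2) + d.+2 * 2)%N.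
  rewrite -!mulnn; lia.
rewrite divnDr ?dvdn_mull // mulnK // expnD !expnS; lia.
Qed.


End Aux.

Theorem lemma3p20 (p m k s N : nat) (S : 'I_N -> {vspace 'rV['F_p]_m}) :
  prime p -> (1 <= k)%N -> (k < m)%N -> (1 <= s)%N ->
  (forall i, \dim (S i) = k) ->
  (s ^ (k + 1) * p ^ ((k ^ 2 + k - 2) %/ 2) <= N)%N ->
  exists I : {set 'I_N}, (s <= #|I|)%N /\ sunflower S I.
Proof.
move=> pp k1 km s1 dS hN.
apply: (@main p m s N S k k1 s1 0%VS [set: 'I_N]).
  by move=> i _; rewrite sub0v dimv0 dS.
rewrite cardsT card_ord; case: k k1 {km dS} hN => [//|k] _ hN.
rewrite g_eq card_Fp //. by rewrite addn1 in hN.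
Qed.
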